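(* Let $(G,s,t)$ be an oriented serial superedge whose principal subgraphs are $(G_1,s_1,t_1),\dots,(G_k,s_k,t_k)$, where $s=s_1$, $t_i=s_{i+1}$ for $1\le i\le k$, and $s_{k+1}=t$, and suppose each $G_i$ is non-serial. Then $\mathrm{Aut}_{\mathrm{or}}(G,s,t)\cong\prod_{i=1}^k\mathrm{Aut}_{\mathrm{or}}(G_i,s_i,t_i)$.
   Context: All graphs are finite, simple and undirected. An oriented series-parallel graph is a triple $(G,s,t)$ where $G$ is a graph and $s\neq t$ are vertices, defined recursively: (i) $G$ is a single edge with vertex set $\{s,t\}$; or (ii) (serial superedge) there are $k\ge 2$ oriented series-parallel graphs $(G_1,s_1,t_1),\dots,(G_k,s_k,t_k)$ with $s_1=s$, $t_k=t$, $t_i=s_{i+1}$ for $1\le i<k$, $V(G_i)\cap V(G_{i+1})=\{s_{i+1}\}$, $V(G_i)\cap V(G_j)=\emptyset$ for $|i-j|\ge2$, and $G=G_1\cup\dots\cup G_k$; or (iii) (parallel superedge) there are $k\ge2$ oriented series-parallel graphs $(G_1,s,t),\dots,(G_k,s,t)$ with $V(G_i)\cap V(G_j)=\{s,t\}$ for $i\neq j$ and $G=G_1\cup\dots\cup G_k$. The $G_i$ are the principal subgraphs. A graph is non-serial if it is not a serial superedge. For an oriented series-parallel graph $(H,u,v)$, $\mathrm{Aut}_{\mathrm{or}}(H,u,v)$ is the group of automorphisms of $H$ fixing both $u$ and $v$. *)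

(* Defs.v *)
From mathcomp Require Import all_boot all_fingroup.
Set Implicit Arguments. Unset Strict Implicit. Unset Printing Implicit Defensive.

Section SPGraphs.
Variable V : finType.

(* A (finite simple) graph inside the universe V: a vertex set and a set of
   edges, each edge being a 2-element set of vertices. *)
Definition graph := ({set V} * {set {set V}})%type.
Definition verts (G : graph) : {set V} := G.1.
Definition edges (G : graph) : {set {set V}} := G.2.

Definition single_edge (s t : V) : graph := ([set s; t], [set [set s; t]]).

Definition big_union (k : nat) (Gs : nat -> graph) : graph :=
  (\bigcup_(i < k) verts (Gs i), \bigcup_(i < k) edges (Gs i)).

(* Structural conditions of a serial superedge (ii), with principal subgraphs
   (Gs i, ss i, ss i.+1) for i < k; thus s_i = ss i, t_i = ss i.+1. *)
Definition serial_cond (G : graph) (s t : V) (k : nat) (Gs : nat -> graph)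
    (ss : nat -> V) : Prop :=
  [/\ 2 <= k, ss 0 = s /\ ss k = t,
      (forall i, i.+1 < k -> verts (Gs i) :&: verts (Gs i.+1) = [set ss i.+1]),
      (forall i j, j < k -> i.+2 <= j -> verts (Gs i) :&: verts (Gs j) = set0)
    & G = big_union k Gs].

Definition parallel_cond (G : graph) (s t : V) (k : nat) (Gs : nat -> graph)
  : Prop :=
  [/\ 2 <= k,
      (forall i j, i < k -> j < k -> i <> j ->
          verts (Gs i) :&: verts (Gs j) = [set s; t])
    & G = big_union k Gs].

Inductive osp : graph -> V -> V -> Prop :=
| osp_edge s t : s != t -> osp (single_edge s t) s t
| osp_serial G s t k Gs ss : s != t ->
    (forall i, i < k -> osp (Gs i) (ss i) (ss i.+1)) ->
    serial_cond G s t k Gs ss -> osp G s t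
| osp_parallel G s t k Gs : s != t ->
    (forall i, i < k -> osp (Gs i) s t) ->
    parallel_cond G s t k Gs -> osp G s t.

Definition is_serial (G : graph) (s t : V) : Prop :=
  s != t /\
  exists k Gs ss, (forall i, i < k -> osp (Gs i) (ss i) (ss i.+1)) /\
                  serial_cond G s t k Gs ss.

(* Automorphisms of a graph H, represented as permutations of V supported on
   V(H) (i.e. extended by the identity outside V(H)). *)
Definition is_aut (H : graph) (f : {perm V}) : bool :=
  perm_on (verts H) f &&
  [forall e : {set V}, (f @: e \in edges H) == (e \in edges H)].

Definition Aut_or (H : graph) (u v : V) : {set {perm V}} :=
  [set f : {perm V} | is_aut H f && (f u == u) && (f v == v)].

Definition iso_to_prod (A : {set {perm V}}) (k : nat)
    (B : 'I_k -> {set {perm V}}) : Prop :=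
  exists phi : {perm V} -> {ffun 'I_k -> {perm V}},
    [/\ {in A &, forall f g, phi (f * g)%g = [ffun i => (phi f i * phi g i)%g]},
        {in A &, injective phi},
        (forall f, f \in A -> forall i, phi f i \in B i)
      & (forall h : {ffun 'I_k -> {perm V}}, (forall i, h i \in B i) ->
           exists2 f, f \in A & phi f = h)].

End SPGraphs.

(* Main.v *)
Require Import Defs.
From mathcomp Require Import all_boot all_fingroup.
From mathcomp Require Import zify.
Set Implicit Arguments. Unset Strict Implicit. Unset Printing Implicit Defensive.

Section Basics.
Variable V : finType.
Implicit Types (H : graph V) (A : {set V}) (Gs : nat -> graph V) (ss : nat -> V).

Definition adj H A : rel V :=
  fun x y => ([set x; y] \in edges H) && (x \notin A) && (y \notin A).

Lemma adj_sym H A : symmetric (adj H A).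
Proof.
move=> x y; rewrite /adj [[set x; y]]setUC.
by case: (_ \in edges H); case: (x \in A); case: (y \in A).
Qed.

Lemma conn_sym H A : connect_sym (adj H A).
Proof. exact: sym_connect_sym (adj_sym H A). Qed.

Lemma conn_mono H H' A A' x y : {subset edges H <= edges H'} ->
  {subset A' <= A} -> connect (adj H A) x y -> connect (adj H' A') x y.
Proof.
move=> sE sA; apply: connect_sub => u v /andP[/andP[e uA] vA]; apply: connect1.
by rewrite /adj (sE _ e) (contra (sA u) uA) (contra (sA v) vA).
Qed.

Lemma conn_src H A x y : connect (adj H A) x y -> x != y -> x \notin A.
Proof.
case/connectP=> [[|z p]] /=; first by move=> _ ->; rewrite eqxx.
by case/andP=> /andP[/andP[_ ->]].
Qed.

Lemma conn_dst H A x y : connect (adj H A) x y -> x != y -> y \notin A.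
Proof. by rewrite conn_sym => c; rewrite eq_sym; apply: conn_src c. Qed.

Definition edges_in H := forall e, e \in edges H -> e \subset verts H.

Lemma conn_out H u : edges_in H -> u \notin verts H ->
  connect (adj H [set u]) =2 connect (adj H set0).
Proof.
move=> eH uV; apply: eq_connect => x y; rewrite /adj !inE /=.
case e: ([set x; y] \in edges H) => //=.
have /subsetP sv := eH _ e.
have hx : x \in verts H by apply: sv; rewrite !inE eqxx.
have hy : y \in verts H by apply: sv; rewrite !inE eqxx orbT.
by apply/andP; split; apply/eqP => E; move: uV; rewrite -E ?hx ?hy.
Qed.

Lemma conn_aut H A f x y : is_aut H f -> connect (adj H A) x y ->
  connect (adj H (f @: A)) (f x) (f y).
Proof.
move=> /andP[_ /forallP af] /connectP[p pp ->]; elim: p x pp => [|z p IH] x /=.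
  by rewrite connect0.
case/andP=> /andP[/andP[e xA] zA] pz; apply: connect_trans (IH _ pz).
apply: connect1; rewrite /adj !mem_imset ?xA ?zA ?andbT; try exact: perm_inj.
by have := af [set x; z]; rewrite imsetU1 imset_set1 e => /eqP ->.
Qed.

Lemma is_autV H f : is_aut H f -> is_aut H f^-1%g.
Proof.
case/andP=> pf /forallP af; rewrite /is_aut perm_onV //=; apply/forallP=> e.
have := af (f^-1%g @: e); rewrite -imset_comp (eq_imset _ (permKV f)) imset_id.
by rewrite eq_sym.
Qed.

Lemma vbu k Gs x : reflect (exists2 i, i < k & x \in verts (Gs i))
  (x \in verts (big_union k Gs)).
Proof.
apply: (iffP bigcupP) => [[i _ h]|[i lt h]]; first by exists i.
by exists (Ordinal lt).
Qed.

Lemma ebu k Gs x : reflect (exists2 i, i < k & x \in edges (Gs i))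
  (x \in edges (big_union k Gs)).
Proof.
apply: (iffP bigcupP) => [[i _ h]|[i lt h]]; first by exists i.
by exists (Ordinal lt).
Qed.

Lemma vbu_sub k Gs i : i < k -> {subset verts (Gs i) <= verts (big_union k Gs)}.
Proof. by move=> lt x h; apply/vbu; exists i. Qed.

Lemma ebu_sub k Gs i : i < k -> {subset edges (Gs i) <= edges (big_union k Gs)}.
Proof. by move=> lt x h; apply/ebu; exists i. Qed.

Lemma osp_term H a b : osp H a b -> [/\ a \in verts H, b \in verts H & a != b].
Proof.
elim=> {H a b}.
- by move=> s t st; rewrite /verts/single_edge /= !inE !eqxx orbT.
- move=> G s t k Gs ss st _ IH [k2 [s0 sk] _ _ ->]; split => //.
    apply/vbu; exists 0; first by lia.
    by rewrite -s0; case: (IH 0 _) => //; lia.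
  apply/vbu; exists k.-1; first by lia.
  have -> : t = ss k.-1.+1 by rewrite prednK ?sk //; lia.
  by case: (IH k.-1 _) => //; lia.
- move=> G s t k Gs st _ IH [k2 _ ->]; split => //; apply/vbu; exists 0;
    try lia; by case: (IH 0 _) => //; lia.
Qed.

Lemma osp_edges H a b : osp H a b ->
  forall e, e \in edges H -> e \subset verts H /\ #|e| = 2.
Proof.
elim=> {H a b}.
- move=> s t st e; rewrite /edges/verts/single_edge /= inE => /eqP ->.
  by rewrite subxx cards2 st.
- move=> G s t k Gs ss st _ IH [_ _ _ _ ->] e /ebu [i lt ei].
  have [h1 h2] := IH i lt e ei; split => //.
  by apply/subsetP=> x /(subsetP h1) hx; apply: (vbu_sub lt).
- move=> G s t k Gs st _ IH [_ _ ->] e /ebu [i lt ei].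
  have [h1 h2] := IH i lt e ei; split => //.
  by apply/subsetP=> x /(subsetP h1) hx; apply: (vbu_sub lt).
Qed.

Lemma osp_edges_in H a b : osp H a b -> edges_in H.
Proof. by move=> o e /(osp_edges o) []. Qed.

Lemma chain k Gs ss A n1 n2 : n1 <= n2 <= k ->
  (forall j, n1 <= j < n2 -> connect (adj (Gs j) A) (ss j) (ss j.+1)) ->
  connect (adj (big_union k Gs) A) (ss n1) (ss n2).
Proof.
elim: n2 => [|n IH] h12 hj; first by have -> : n1 = 0 by lia.
have [->|ne] := eqVneq n1 n.+1; first exact: connect0.
apply: connect_trans (IH _ _) _; first by lia.
  by move=> j hjj; apply: hj; lia.
by apply: conn_mono (hj n _) => //; [apply: ebu_sub; lia | lia].
Qed.

Lemma osp_conn H a b : osp H a b ->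
  forall x, x \in verts H -> connect (adj H set0) x a.
Proof.
elim=> {H a b}.
- move=> s t st x; rewrite /verts/single_edge /= !inE => /orP[]/eqP ->.
    exact: connect0.
  by apply: connect1; rewrite /adj !inE setUC eqxx.
- move=> G s t k Gs ss st o IH [k2 [s0 sk] _ _ ->] x /vbu [m lt xm].
  apply: connect_trans (conn_mono (ebu_sub lt) _ (IH m lt x xm)) _ => //.
  rewrite -s0 conn_sym; apply: chain; first by lia.
  move=> j hj; rewrite conn_sym; apply: IH; first by lia.
  by case: (osp_term (o j _)) => //; lia.
- move=> G s t k Gs st _ IH [k2 _ ->] x /vbu [m lt xm].
  by apply: conn_mono (IH m lt x xm) => //; apply: ebu_sub.
Qed.


Lemma conn_ne H u x y : connect (adj H [set u]) x y -> u != x -> u != y.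
Proof.
move=> c ux; have [<-|xy] := eqVneq x y => //.
by have := conn_dst c xy; rewrite inE eq_sym.
Qed.

Section Serial.
Variables (G : graph V) (s t : V) (k : nat) (Gs : nat -> graph V) (ss : nat -> V).
Hypothesis osps : forall i, i < k -> osp (Gs i) (ss i) (ss i.+1).
Hypothesis sc : serial_cond G s t k Gs ss.

Local Notation S i := (verts (Gs i)).

Lemma s_Int i j x : i < j -> j < k -> x \in S i -> x \in S j -> j = i.+1 /\ x = ss j.
Proof.
case: sc => _ _ h3 h4 _ ij jk xi xj.
have [e|ne] := eqVneq j i.+1.
  subst j; split => //; have := h3 i jk; move/setP/(_ x); rewrite !inE xi xj /=.
  by move/esym/eqP.
have := h4 i j jk _; move/(_ _)/setP/(_ x); rewrite !inE xi xj /=.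
by move=> h; have := h ltac:(lia).
Qed.

Lemma s_ssL j : j < k -> ss j \in S j.
Proof. by move=> jk; case: (osp_term (osps jk)). Qed.

Lemma s_ssR j : j < k -> ss j.+1 \in S j.
Proof. by move=> jk; case: (osp_term (osps jk)). Qed.

Lemma s_ne j : j < k -> ss j != ss j.+1.
Proof. by move=> jk; case: (osp_term (osps jk)). Qed.

Lemma s_inj i j : i <= k -> j <= k -> ss i = ss j -> i = j.
Proof.
wlog ij : i j / i <= j.
  move=> W ik jk e; case: (leqP i j) => h; first exact: W.
  by apply/esym/W => //; lia.
move=> ik jk e; have [//|ne0] := eqVneq i j.
have lt : i < j by lia.
have j1 : ss j \in S j.-1.
  have jk1 : j.-1 < k by lia.
  have e1 : j.-1.+1 = j by lia.
  by have := s_ssR jk1; rewrite e1.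
have i1 : ss i \in S i by apply: s_ssL; lia.
have ik' : i < k by lia.
have [ei|ne] := eqVneq i j.-1.
  have := s_ne ik'; have -> : i.+1 = j by lia.
  by rewrite e eqxx.
have lt1 : i < j.-1 by lia.
have jk1 : j.-1 < k by lia.
have i2 : ss i \in S j.-1 by rewrite e.
have [h1 h2] := s_Int lt1 jk1 i1 i2.
by have := s_ne ik'; rewrite h2 -h1 eqxx.
Qed.

Lemma s_ssIn j i : i < k -> j <= k -> ss j \in S i -> j = i \/ j = i.+1.
Proof.
move=> ik jk h.
have [jk'|jk'] := ltnP j k.
  have hj := s_ssL jk'; case: (ltngtP i j) => lt; [|idtac|by left].
    by have [] := s_Int lt jk' h hj; right.
  by have [_ /s_inj] := s_Int lt ik hj h; lia.
have jkk : j = k by lia. subst j.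
have hj : ss k \in S k.-1.
  have jk1 : k.-1 < k by lia.
  have e1 : k.-1.+1 = k by lia.
  by have := s_ssR jk1; rewrite e1.
case: (ltngtP i k.-1) => lt; [|lia|by right; lia].
have k1 : k.-1 < k by lia.
have [h1 h2] := s_Int lt k1 h hj.
by have := @s_inj k k.-1 (leqnn k) (leq_pred k) h2; lia.
Qed.

Lemma s_edge_of e : e \in edges G -> exists2 j, j < k & e \in edges (Gs j).
Proof. by case: sc => _ _ _ _ -> /ebu. Qed.

Lemma s_verts x : x \in verts G -> exists2 j, j < k & x \in S j.
Proof. by case: sc => _ _ _ _ -> /vbu. Qed.

Lemma s_verts_sub i : i < k -> {subset S i <= verts G}.
Proof. by case: sc => _ _ _ _ -> ik; apply: vbu_sub. Qed.

Lemma s_edges_sub i : i < k -> {subset edges (Gs i) <= edges G}.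
Proof. by case: sc => _ _ _ _ -> ik; apply: ebu_sub. Qed.

Lemma s_edge e i : i < k -> e \in edges G -> e \subset S i -> e \in edges (Gs i).
Proof.
move=> ik /s_edge_of [j jk ej] eS.
have [ij|ne] := eqVneq i j; first by subst.
have [sj c2] := osp_edges (osps jk) ej.
suff : #|e| <= 1 by rewrite c2.
have : e \subset [set ss (maxn i j)].
  apply/subsetP=> x xe; rewrite inE; have xi := subsetP eS x xe.
  have xj := subsetP sj x xe.
  case: (ltngtP i j) => lt.
  - by have [_ ->] := s_Int lt jk xi xj.
  - by have [_ ->] := s_Int lt ik xj xi.
  - by rewrite lt eqxx in ne.
by move/subset_leq_card; rewrite cards1.
Qed.

Lemma s_conn_step j u : j < k -> u \notin S j ->
  connect (adj (Gs j) [set u]) (ss j) (ss j.+1).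
Proof.
move=> jk uj; rewrite (conn_out (osp_edges_in (osps jk)) uj) conn_sym.
by apply: osp_conn (osps jk) _ (s_ssR jk).
Qed.

Lemma s_s0 : ss 0 = s. Proof. by case: sc => _ []. Qed.
Lemma s_sk : ss k = t. Proof. by case: sc => _ []. Qed.
Lemma s_G : G = big_union k Gs. Proof. by case: sc. Qed.

Lemma s_left m u : m <= k -> (forall j, j < m -> u \notin S j) ->
  connect (adj G [set u]) (ss m) s.
Proof.
move=> mk h; rewrite -s_s0 conn_sym s_G; apply: chain; first lia.
move=> j hj; apply: s_conn_step; [lia | apply: h; lia].
Qed.

Lemma s_right m u : m <= k -> (forall j, m <= j < k -> u \notin S j) ->
  connect (adj G [set u]) (ss m) t.
Proof.
move=> mk h; rewrite -s_sk s_G; apply: chain; first lia.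
move=> j hj; apply: s_conn_step; [lia | apply: h; lia].
Qed.

Lemma s_lift j A x y : j < k -> connect (adj (Gs j) A) x y -> connect (adj G A) x y.
Proof. by move=> jk; apply: conn_mono => //; apply: s_edges_sub. Qed.

End Serial.

Lemma osp_P H a b : osp H a b -> forall x u, x \in verts H -> u != x ->
  connect (adj H [set u]) x a || connect (adj H [set u]) x b.
Proof.
elim=> {H a b}.
- move=> s t st x u; rewrite /verts/single_edge /= !inE => /orP[]/eqP -> _;
    by rewrite connect0 ?orbT.
- move=> G s t k Gs ss st o IH sc x u /(s_verts sc) [m mk xm] ux.
  case uSm: (u \in verts (Gs m)).
  + case/orP: (IH m mk x u xm ux) => c.
    * apply/orP; left; apply: connect_trans (s_lift sc mk c) _.
      apply: (s_left o sc); first lia.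
      move=> j jm; apply/negP => uj.
      have [_ e] := s_Int sc jm mk uj uSm.
      by move: (conn_ne c ux); rewrite e eqxx.
    * apply/orP; right; apply: connect_trans (s_lift sc mk c) _.
      apply: (s_right o sc); first lia.
      move=> j hj; apply/negP => uj.
      have mj : m < j by lia.
      have jk : j < k by lia.
      have [e1 e2] := s_Int sc mj jk uSm uj.
      by move: (conn_ne c ux); rewrite e2 e1 eqxx.
  + have uSm' : u \notin verts (Gs m) by rewrite uSm.
    have cm : connect (adj (Gs m) [set u]) x (ss m).
      by rewrite (conn_out (osp_edges_in (o m mk)) uSm'); exact: osp_conn (o m mk) _ xm.
    have cm1 : connect (adj (Gs m) [set u]) x (ss m.+1).
      exact: connect_trans cm (s_conn_step o mk uSm').
    case: (boolP [forall j : 'I_m, u \notin verts (Gs j)]) => [/forallP h|/forallPn [j /negPn uj]].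
    * apply/orP; left; apply: connect_trans (s_lift sc mk cm) (s_left o sc _ _).
        lia.
      by move=> j jm; exact: h (Ordinal jm).
    * apply/orP; right; apply: connect_trans (s_lift sc mk cm1) (s_right o sc _ _).
        lia.
      move=> j' hj'; apply/negP => uj'.
      have jj : j < j' by have := ltn_ord j; lia.
      have jk : j' < k by lia.
      have [e1 _] := s_Int sc jj jk uj uj'.
      by have := ltn_ord j; lia.
- move=> G s t k Gs st o IH [k2 _ ->] x u /vbu [m mk xm] ux.
  by case/orP: (IH m mk x u xm ux) => c; apply/orP; [left|right];
    exact: conn_mono (ebu_sub mk) _ c.
Qed.

Lemma osp_Q H a b : osp H a b -> ~ is_serial H a b ->
  forall u, u \in verts H -> u != a -> u != b -> connect (adj H [set u]) a b.
Proof.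
case=> {H a b}.
- move=> s t st _ u; rewrite /verts/single_edge /= !inE.
  by case/orP => /eqP ->; rewrite eqxx.
- move=> G s t k Gs ss st o sc nser; case: nser; split => //.
  by exists k, Gs, ss.
- move=> G s t k Gs st o [k2 hI ->] _ u /vbu [l lk ul] us ut.
  pose l' := if l == 0 then 1 else 0.
  have l'k : l' < k by rewrite /l'; case: (l == 0); lia.
  have ll : l != l' by rewrite /l'; case: (l =P 0) => h; apply/eqP; lia.
  have ul' : u \notin verts (Gs l').
    apply/negP => h; have := hI l l' lk l'k (elimN eqP ll).
    by move/setP/(_ u); rewrite !inE ul h (negPf us) (negPf ut).
  apply: (conn_mono (ebu_sub l'k) (fun x (h : x \in [set u]) => h)).
  rewrite (conn_out (osp_edges_in (o l' l'k)) ul') conn_sym.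
  by apply: osp_conn (o l' l'k) _ _; case: (osp_term (o l' l'k)).
Qed.

End Basics.

Section Main.
Variable V : finType.

Lemma autorV (H : graph V) u v f : f \in Aut_or H u v -> (f^-1)%g \in Aut_or H u v.
Proof.
rewrite !inE => /andP[/andP[af /eqP fu] /eqP fv].
by rewrite is_autV //= -{1}fu -{1}fv !permK !eqxx.
Qed.

Variables (G : graph V) (s t : V) (k : nat) (Gs : nat -> graph V) (ss : nat -> V).
Hypothesis st : s != t.
Hypothesis osps : forall i, i < k -> osp (Gs i) (ss i) (ss i.+1).
Hypothesis sc : serial_cond G s t k Gs ss.
Hypothesis nser : forall i, i < k -> ~ is_serial (Gs i) (ss i) (ss i.+1).

Local Notation S i := (verts (Gs i)).

Definition sepr u w := [&& u != w, u != s & ~~ connect (adj G [set u]) s w].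

Lemma k2 : 1 < k. Proof. by case: sc. Qed.

Lemma charB j m w : 0 < j -> j <= m -> m < k -> w \in S m -> w != ss j ->
  sepr (ss j) w.
Proof.
move=> j0 jm mk wm wj; rewrite /sepr eq_sym wj /=.
apply/andP; split.
  rewrite -(s_s0 sc); apply/eqP => /(s_inj osps sc) h; have := h _ _; lia.
apply/negP => c.
pose X := [set x | [exists i : 'I_j, x \in S i] && (x != ss j)].
have clX : closed (adj G [set ss j]) X.
  apply: (intro_closed (conn_sym G [set ss j])) => x y /andP[/andP[e xA] yA].
  rewrite !inE => /andP[/existsP [i xi] xj].
  move: yA; rewrite inE => yj; rewrite yj andbT.
  have [m' m'k em'] := s_edge_of sc e.
  have [sub _] := osp_edges (osps m'k) em'.
  have xm' : x \in S m' by apply: (subsetP sub); rewrite !inE eqxx.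
  have ym' : y \in S m' by apply: (subsetP sub); rewrite !inE eqxx orbT.
  have [lt|ge] := ltnP m' j; first by apply/existsP; exists (Ordinal lt).
  have im : i < m' by have := ltn_ord i; lia.
  have [e1 e2] := s_Int sc im m'k xi xm'.
  have : m' = j by have := ltn_ord i; lia.
  by move=> h; move: xj; rewrite e2 h eqxx.
have := closed_connect clX c.
rewrite !inE.
have -> : (s != ss j) by rewrite -(s_s0 sc); apply/eqP => /(s_inj osps sc) h; have := h _ _; lia.
have -> : [exists i : 'I_j, s \in S i].
  apply/existsP; exists (Ordinal j0); rewrite -(s_s0 sc); apply: (s_ssL osps); lia.
rewrite wj !andbT /= => /esym/existsP [i wi].
have im : i < m by have := ltn_ord i; lia.
have [e1 e2] := s_Int sc im mk wi wm.
have : m = j by have := ltn_ord i; lia.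
by move=> h; move: wj; rewrite e2 h eqxx.
Qed.


Lemma leftQ n u : n <= k -> u != s -> (forall j, 0 < j <= n -> u != ss j) ->
  connect (adj G [set u]) (ss n) s.
Proof.
move=> nk us h; rewrite -(s_s0 sc) conn_sym (s_G sc); apply: chain; first lia.
move=> j hj; have jk : j < k by lia.
case uj: (u \in S j); last by apply: (s_conn_step osps jk); rewrite uj.
apply: (osp_Q (osps jk) (nser jk) uj).
  by case: j hj jk uj => [|j] hj jk uj; [rewrite (s_s0 sc) | apply: h; lia].
by apply: h; lia.
Qed.

Lemma charA u w : w \in verts G -> sepr u w ->
  exists j, [/\ 0 < j, j < k, u = ss j & exists2 m, j <= m < k & w \in S m].
Proof.
move=> wG /and3P[uw us nc].
case: (boolP [exists j : 'I_k, [exists m : 'I_k, [&& 0 < j, u == ss j, j <= m & w \in S m]]]).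
  case/existsP=> j /existsP [m /and4P[j0 /eqP uj jm wm]].
  exists j; split => //; exists m => //; by rewrite jm ltn_ord.
move=> hn; case/negP: nc.
have [m mk wm] := s_verts sc wG.
have hu : forall j, 0 < j <= m -> u != ss j.
  move=> j hj; apply/eqP => uj; case/negP: hn; apply/existsP.
  have jk : j < k by lia.
  exists (Ordinal jk); apply/existsP; exists (Ordinal mk).
  by rewrite /= uj eqxx wm; apply/andP; split; [lia|]; apply/andP; split; [|lia].
have um : u != ss m.
  by case: m mk wm hu => [|m] mk wm hu; [rewrite (s_s0 sc) | apply: hu; lia].
have L := leftQ (ltnW mk) us hu.
rewrite conn_sym; apply: connect_trans _ L.
case uSm: (u \in S m).
  case/orP: (osp_P (osps mk) wm uw) => c; first exact: (s_lift sc mk c).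
  have c' := conn_ne c uw.
  apply: (s_lift sc mk); apply: connect_trans c _.
  by rewrite conn_sym; apply: (osp_Q (osps mk) (nser mk) uSm um).
apply: (s_lift sc mk).
rewrite (conn_out (osp_edges_in (osps mk))) ?uSm //.
exact: osp_conn (osps mk) _ wm.
Qed.

Lemma inv f u w : f \in Aut_or G s t -> sepr u w -> sepr (f u) (f w).
Proof.
rewrite inE => /andP[/andP[af /eqP fs] _] /and3P[uw us nc].
rewrite /sepr (inj_eq perm_inj) uw -{1}fs (inj_eq perm_inj) us /=.
apply/negP => c; case/negP: nc.
have := conn_aut (is_autV af) c; rewrite imset_set1 !permK.
by rewrite -{1}fs permK.
Qed.


Lemma ss_verts j : j <= k -> ss j \in verts G.
Proof.
move=> jk; have [lt|ge] := ltnP j k.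
  exact: (s_verts_sub sc lt) (s_ssL osps lt).
have k1 : k.-1 < k by have := k2; lia.
apply: (s_verts_sub sc k1); have := s_ssR osps k1.
by have -> : k.-1.+1 = j by have := k2; lia.
Qed.

Lemma t_last : t \in S k.-1.
Proof.
have k1 : k.-1 < k by have := k2; lia.
have := s_ssR osps k1; have -> : k.-1.+1 = k by have := k2; lia.
by rewrite (s_sk sc).
Qed.

Lemma autP f : f \in Aut_or G s t -> [/\ is_aut G f, f s = s & f t = t].
Proof. by rewrite inE => /andP[/andP[? /eqP ?] /eqP ?]. Qed.

Lemma ssinj i j : i <= k -> j <= k -> ss i = ss j -> i = j.
Proof. by move=> ik jk; apply: (s_inj osps sc ik jk). Qed.

Lemma sepmap f j : f \in Aut_or G s t -> 0 < j < k ->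
  exists j', [/\ 0 < j', j' < k & f (ss j) = ss j'].
Proof.
move=> fA hj; have [af fs ft] := autP fA.
have h : sepr (ss j) t.
  apply: (charB (m := k.-1)) t_last _; try (have := k2; lia).
  rewrite -(s_sk sc); apply/eqP => e.
  have jk : j <= k by lia.
  by have := ssinj (leqnn k) jk e; lia.
have := inv fA h; rewrite ft => h'.
have tG : t \in verts G by rewrite -(s_sk sc); apply: ss_verts.
have [j' [j'0 j'k e _]] := charA tG h'.
by exists j'.
Qed.

Lemma mono f a b a' b' : f \in Aut_or G s t -> 0 < a -> a < b -> b < k ->
  a' < k -> b' < k -> f (ss a) = ss a' -> f (ss b) = ss b' -> a' < b'.
Proof.
move=> fA a0 ab bk a'k b'k fa fb.
have h : sepr (ss a) (ss b).
  apply: (charB a0 (ltnW ab) bk (s_ssL osps bk)).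
  apply/eqP => e; have := ssinj (ltnW bk) (ltnW (ltn_trans ab bk)) e; lia.
have := inv fA h; rewrite fa fb => h'.
have [j [j0 jk e [m hm wm]]] := charA (ss_verts (ltnW b'k)) h'.
have ej := ssinj (ltnW a'k) (ltnW jk) e; subst j.
have mk : m < k by lia.
have := s_ssIn osps sc mk (ltnW b'k) wm.
case/and3P: h' => ne _ _.
have ne' : a' != b' by apply: contraNneq ne => ->.
lia.
Qed.

Lemma ge f : f \in Aut_or G s t -> forall j, 0 < j < k ->
  forall j', j' < k -> f (ss j) = ss j' -> j <= j'.
Proof.
move=> fA; elim=> [|j IH] // hj j' j'k e.
have [j'' [j''0 j''k e'']] := sepmap fA hj.
have ej : j' = j'' by apply: ssinj; [lia|lia|rewrite -e -e''].
subst j''.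
have [->|j0] := eqVneq j 0; first by [].
have hj1 : 0 < j < k by lia.
have [j1 [j10 j1k e1]] := sepmap fA hj1.
have := IH hj1 j1 j1k e1.
have := mono fA _ _ _ _ _ e1 e; lia.
Qed.

Lemma fixss f j : f \in Aut_or G s t -> j <= k -> f (ss j) = ss j.
Proof.
move=> fA jk; have [af fs ft] := autP fA.
have [->|j0] := eqVneq j 0; first by rewrite (s_s0 sc).
have [->|jk'] := eqVneq j k; first by rewrite (s_sk sc).
have hj : 0 < j < k by lia.
have [j' [j'0 j'k e]] := sepmap fA hj.
have h1 := ge fA hj j'k e.
have e2 : (f^-1)%g (ss j') = ss j by rewrite -e permK.
have hj' : 0 < j' < k by lia.
have jk2 : j < k by lia.
have h2 := ge (autorV fA) hj' jk2 e2.
have ej : j' = j by lia.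
by rewrite e ej.
Qed.

Lemma nodown f m y i : f \in Aut_or G s t -> m < k -> y \in S m -> y != ss m ->
  i < k -> f y \in S i -> m <= i.
Proof.
move=> fA mk ym ynm ik fyi; have [lt|//] := ltnP i m.
have := charB (_ : 0 < m) (leqnn m) mk ym ynm => /(_ ltac:(lia)) h.
have := inv fA h; rewrite (fixss fA (ltnW mk)) => h'.
have fyG : f y \in verts G by apply: (s_verts_sub sc ik).
have [j [j0 jk e [m' hm wm']]] := charA fyG h'.
have ej := ssinj (ltnW mk) (ltnW jk) e; subst j.
have im' : i < m' by lia.
have m'k : m' < k by lia.
have [e1 e2] := s_Int sc im' m'k fyi wm'.
have : y = ss m' by apply: (@perm_inj _ f); rewrite e2 fixss //; lia.
have -> : m' = m by lia.
by move=> yy; rewrite yy eqxx in ynm.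
Qed.

Lemma core f i x : f \in Aut_or G s t -> i < k -> x \in S i -> f x \in S i.
Proof.
move=> fA ik xi; have [af fs ft] := autP fA.
have [->|xn] := eqVneq x (ss i); first by rewrite fixss ?(s_ssL osps) //; lia.
have [->|xn1] := eqVneq x (ss i.+1); first by rewrite fixss ?(s_ssR osps) //.
have pf : perm_on (verts G) f by case/andP: af.
have : f x \in verts G by rewrite (perm_closed _ pf); apply: (s_verts_sub sc ik).
case/(s_verts sc) => m' m'k fxm.
have h1 := nodown fA ik xi xn m'k fxm.
have fxn : f x != ss m'.
  apply/eqP => e.
  have : x = ss m' by apply: (@perm_inj _ f); rewrite e fixss //; lia.
  move=> xe; have := s_ssIn osps sc ik (ltnW m'k) (_ : ss m' \in S i).
  by rewrite -xe => /(_ xi) [] h; move: xn xn1; rewrite xe h eqxx.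
have := nodown (autorV fA) m'k fxm fxn ik; rewrite permK => /(_ xi) h2.
by have -> : i = m' by lia.
Qed.


Lemma autP2 (H : graph V) u v f : f \in Aut_or H u v -> [/\ is_aut H f, f u = u & f v = v].
Proof. by rewrite inE => /andP[/andP[? /eqP ?] /eqP ?]. Qed.

Lemma inN f i : f \in Aut_or G s t -> i < k -> f \in ('N(S i | 'P))%g.
Proof.
move=> fA ik; apply/astabsP => x /=; rewrite apermE.
apply/idP/idP => h; last exact: core fA ik h.
by have := core (autorV fA) ik h; rewrite permK.
Qed.

Definition phi (f : {perm V}) : {ffun 'I_k -> {perm V}} :=
  [ffun i : 'I_k => restr_perm (S i) f].

Lemma restr_in f (i : 'I_k) : f \in Aut_or G s t ->
  restr_perm (S i) f \in Aut_or (Gs i) (ss i) (ss i.+1).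
Proof.
move=> fA; have [af fs ft] := autP fA; have ik := ltn_ord i.
have nf := inN fA ik.
have RE : {in S i, restr_perm (S i) f =1 f} by move=> x xi; rewrite restr_permE.
have e0 : restr_perm (S i) f (ss i) = ss i.
  by rewrite RE ?(s_ssL osps ik) // fixss //; lia.
have e1 : restr_perm (S i) f (ss i.+1) = ss i.+1.
  by rewrite RE ?(s_ssR osps ik) // fixss.
rewrite inE /is_aut restr_perm_on e0 e1 !eqxx !andbT /=.
apply/forallP => e; apply/eqP; apply/idP/idP => h.
  have [sub _] := osp_edges (osps ik) h.
  have eS : e \subset S i.
    apply/subsetP => x xe.
    have : restr_perm (S i) f x \in S i by apply: (subsetP sub); apply: imset_f.
    by rewrite (perm_closed _ (restr_perm_on _ _)).
  rewrite (eq_in_imset (fun x xe => RE x (subsetP eS x xe))) in h.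
  have h2 : f @: e \in edges G by apply: (s_edges_sub sc ik).
  case/andP: af => _ /forallP /(_ e); rewrite h2 eq_sym => /eqP eE.
  exact: (s_edge osps sc ik eE eS).
have [sub _] := osp_edges (osps ik) h.
rewrite (eq_in_imset (fun x xe => RE x (subsetP sub x xe))).
have eG : e \in edges G by apply: (s_edges_sub sc ik).
case/andP: af => _ /forallP /(_ e); rewrite eG => /eqP fe.
apply: (s_edge osps sc ik fe); apply/subsetP => y /imsetP [x xe ->].
exact: core fA ik (subsetP sub x xe).
Qed.

Section Glue.
Variable h : {ffun 'I_k -> {perm V}}.
Hypothesis hA : forall i : 'I_k, h i \in Aut_or (Gs i) (ss i) (ss i.+1).

Definition glue (h : {ffun 'I_k -> {perm V}}) x :=
  if [pick i : 'I_k | x \in S i] is Some i then h i x else x.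

Lemma glueE_gen (h' : {ffun 'I_k -> {perm V}}) :
  (forall i : 'I_k, h' i \in Aut_or (Gs i) (ss i) (ss i.+1)) ->
  forall (i : 'I_k) x, x \in S i -> glue h' x = h' i x.
Proof.
move=> hA' i x xi; rewrite /glue; case: pickP => [j xj|]; last by move/(_ i); rewrite xi.
have [->|ne] := eqVneq j i; first done.
have [_ hj0 hj1] := autP2 (hA' j); have [_ hi0 hi1] := autP2 (hA' i).
case: (ltngtP i j) => lt.
- have [e1 e2] := s_Int sc lt (ltn_ord j) xi xj.
  by rewrite e2 hj0 e1 hi1.
- have [e1 e2] := s_Int sc lt (ltn_ord i) xj xi.
  by rewrite e2 hi0 e1 hj1.
- have ji : j = i by apply: val_inj.
  by rewrite ji eqxx in ne.
Qed.

Lemma glueO (h' : {ffun 'I_k -> {perm V}}) x : x \notin verts G -> glue h' x = x.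
Proof.
move=> xG; rewrite /glue; case: pickP => [j xj|//].
by rewrite (s_verts_sub sc (ltn_ord j) xj) in xG.
Qed.

Definition hinv := [ffun i => (h i)^-1]%g.

Lemma hinvA i : hinv i \in Aut_or (Gs i) (ss i) (ss i.+1).
Proof. by rewrite ffunE autorV. Qed.

Lemma glueK : cancel (glue h) (glue hinv).
Proof.
move=> x; case xG: (x \in verts G); last by rewrite !glueO ?xG.
have [m mk xm] := s_verts sc xG.
have [[pf _] _ _] := (autP2 (hA (Ordinal mk)), 0).
rewrite (glueE_gen hA (i := Ordinal mk)) //.
rewrite (glueE_gen hinvA (i := Ordinal mk)) ?ffunE ?permK //.
by case/andP: pf => pf _; rewrite (perm_closed _ pf).
Qed.

Definition F := perm (can_inj glueK).

Lemma FE : F =1 glue h. Proof. exact: permE. Qed.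

Lemma FA : F \in Aut_or G s t.
Proof.
have k0 : 0 < k by have := k2; lia.
have k1 : k.-1 < k by lia.
rewrite inE /is_aut; apply/andP; split; first (apply/andP; split).
- apply/andP; split.
    apply/subsetP => x; rewrite inE /= FE; apply: contraR => xn.
    by rewrite glueO // eqxx.
  apply/forallP => e; apply/eqP; rewrite (eq_imset _ FE); apply/idP/idP => he.
    have [j jk ej] := s_edge_of sc he.
    have [sub _] := osp_edges (osps jk) ej.
    have [aj _ _] := autP2 (hA (Ordinal jk)).
    have eS : e \subset S j.
      apply/subsetP => x xe.
      have gx : glue h x \in S j by apply: (subsetP sub); apply: imset_f.
      rewrite -(glueK x) (glueE_gen hinvA (i := Ordinal jk)) // ffunE.
      by case/andP: aj => pf _; rewrite (perm_closed _ (perm_onV pf)).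
    rewrite (eq_in_imset (fun x xe => glueE_gen hA (i := Ordinal jk) (subsetP eS x xe))) in ej.
    case/andP: aj => _ /forallP /(_ e); rewrite ej eq_sym => /eqP ee.
    by apply: (s_edges_sub sc jk).
  have [j jk ej] := s_edge_of sc he.
  have [sub _] := osp_edges (osps jk) ej.
  have [aj _ _] := autP2 (hA (Ordinal jk)).
  rewrite (eq_in_imset (fun x xe => glueE_gen hA (i := Ordinal jk) (subsetP sub x xe))).
  case/andP: aj => _ /forallP /(_ e); rewrite ej => /eqP ee.
  by apply: (s_edges_sub sc jk); rewrite ee.
- rewrite FE (glueE_gen hA (i := Ordinal k0)) /=; last by rewrite -(s_s0 sc) (s_ssL osps k0).
  by have [_ e _] := autP2 (hA (Ordinal k0)); rewrite -(s_s0 sc) /= e.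
- rewrite FE (glueE_gen hA (i := Ordinal k1)) /=; last exact: t_last.
  have [_ _ e] := autP2 (hA (Ordinal k1)); move: e => /=.
  have kk : k.-1.+1 = k by lia.
  by rewrite kk (s_sk sc) => ->.
Qed.

Lemma phiF : phi F = h.
Proof.
apply/ffunP => i; rewrite ffunE; apply/permP => x.
have [[pf _] _ _] := (autP2 (hA i), 0).
case xi: (x \in S i).
  by rewrite restr_permE ?(inN FA) // FE (glueE_gen hA (i := i)).
rewrite !(out_perm (restr_perm_on _ _)) ?xi // (out_perm _ (_ : x \notin S i)) ?xi //.
by case/andP: pf.
Qed.

End Glue.

Lemma main_iso : iso_to_prod (Aut_or G s t) (fun i : 'I_k => Aut_or (Gs i) (ss i) (ss i.+1)).
Proof.
exists phi; split.
- move=> f g fA gA; apply/ffunP => i; rewrite !ffunE; apply/permP => x.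
  have ik := ltn_ord i.
  have nf := inN fA ik; have ng := inN gA ik.
  have nfg : (f * g)%g \in ('N(S i | 'P))%g by rewrite groupM.
  case xi: (x \in S i).
    rewrite permM (restr_permE nfg xi) permM (restr_permE nf xi).
    by rewrite (restr_permE ng) // core.
  by rewrite permM !(out_perm (restr_perm_on _ _)) ?xi.
- move=> f g fA gA e; apply/permP => x.
  case xG: (x \in verts G).
    have [m mk xm] := s_verts sc xG.
    have := congr1 (fun h : {ffun 'I_k -> {perm V}} => h (Ordinal mk) x) e.
    by rewrite /= !ffunE !restr_permE ?(inN fA) ?(inN gA).
  have [af _ _] := autP fA; have [ag _ _] := autP gA.
  case/andP: af => pf _; case/andP: ag => pg _.
  by rewrite (out_perm pf) ?(out_perm pg) ?xG.
- by move=> f fA i; rewrite ffunE; apply: restr_in.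
- move=> h hA; exists (F hA); [exact: FA | exact: phiF].
Qed.

End Main.

Unset Implicit Arguments.
Theorem theorem5p3 (V : finType) (G : graph V) (s t : V) (k : nat)
    (Gs : nat -> graph V) (ss : nat -> V) :
  s != t ->
  (forall i, i < k -> osp (Gs i) (ss i) (ss i.+1)) ->
  serial_cond G s t k Gs ss ->
  (forall i, i < k -> ~ is_serial (Gs i) (ss i) (ss i.+1)) ->
  iso_to_prod (Aut_or G s t) (fun i : 'I_k => Aut_or (Gs i) (ss i) (ss i.+1)).
Proof. by move=> st o sc ns; apply: main_iso. Qed.
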